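(* Let $(A,B)\in M_k(\mathbb{F}_q)\times M_{k,n-k}(\mathbb{F}_q)$ and let $T\in L(W,V)$ be the linear map whose matrix with respect to $\mathcal{B}_1,\mathcal{B}_2$ is $\begin{bmatrix}A^{\mathsf T}\\ B^{\mathsf T}\end{bmatrix}\in M_{n,k}(\mathbb{F}_q)$. Then $\operatorname{rank}\mathcal{C}(A,B)=k-\dim\mathfrak{I}(T)$, i.e. the pair $(A,B)$ has a reachability subspace of dimension $k-\dim\mathfrak{I}(T)$.
   Context: Let $\mathbb{F}_q$ be the finite field with $q$ elements, $n> k$ positive integers, $V$ an $n$-dimensional $\mathbb{F}_q$-vector space and $W\subseteq V$ a $k$-dimensional subspace. Fix an ordered basis $\mathcal{B}_1=(v_1,\ldots,v_k)$ of $W$ and extend it to an ordered basis $\mathcal{B}_2=(v_1,\ldots,v_n)$ of $V$. $L(W,V)$ is the space of linear maps $W\to V$; for $T\in L(W,V)$, $\mathfrak{I}(T)$ is the largest subspace $U\subseteq W$ with $T(U)\subseteq U$. For $(A,B)\in M_k(\mathbb{F}_q)\times M_{k,n-k}(\mathbb{F}_q)$, the reachability matrix is $\mathcal{C}(A,B)=[\,B\ \ AB\ \ \cdots\ \ A^{k-1}B\,]\in M_{k,k(n-k)}(\mathbb{F}_q)$, and $(A,B)$ is said to have an $r$-dimensional reachability subspace if $\operatorname{rank}\mathcal{C}(A,B)=r$. *)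

(* Defs.v *)
From HB Require Import structures.
From mathcomp Require Import all_boot all_order all_algebra all_fingroup all_field.
Set Implicit Arguments. Unset Strict Implicit. Unset Printing Implicit Defensive.
Import GRing.Theory.
Local Open Scope ring_scope.

(* Coordinates: V = F^(k + (n-k)) with basis B2 = standard basis,
   W = span of the first k basis vectors, identified with F^k via B1.
   A vector of W is a column vector x : 'cV_k; its image under T has
   coordinate column Tm *m x where Tm : 'M_(k + (n-k), k) is the matrix
   of T.  Subspaces are represented by matrices whose ROWS span them
   (mathcomp row-space convention), so the subspace of W spanned by the
   rows of U : 'M_(r,k) is mapped by T to the row space of U *m Tm^T. *)

Section Defs.
Variable F : fieldType.
Variables k m : nat.

Definition inclW r (U : 'M[F]_(r, k)) : 'M[F]_(r, k + m) := row_mx U 0.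

Definition T_invariant (Tm : 'M[F]_(k + m, k)) r (U : 'M[F]_(r, k)) : bool :=
  (U *m Tm^T <= inclW U)%MS.

(* U is the largest subspace of W with T(U) ⊆ U, i.e. U represents 𝔍(T) *)
Definition is_largest_invariant (Tm : 'M[F]_(k + m, k)) (U : 'M[F]_k) : Prop :=
  T_invariant Tm U /\
  forall r (U' : 'M[F]_(r, k)), T_invariant Tm U' -> (U' <= U)%MS.

Lemma reach_col_lt (j : 'I_(k * m)) : (j %% m < m)%N.
Proof.
case: m j => [|m'] j; last by rewrite ltn_pmod.
by case: j => j; rewrite muln0.
Qed.

(* reachability matrix C(A,B) = [B  AB ... A^(k-1) B] : column j of C is
   column (j mod m) of block A^(j div m) B *)
Definition reach (A : 'M[F]_k) (B : 'M[F]_(k, m)) : 'M[F]_(k, k * m) :=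
  \matrix_(i < k, j < k * m)
     (A ^+ (j %/ m) *m B) i (Ordinal (reach_col_lt j)).

End Defs.

(* Main.v *)
Require Import Defs.
From HB Require Import structures.
From mathcomp Require Import all_boot all_order all_algebra all_fingroup all_field.
Set Implicit Arguments. Unset Strict Implicit.
Import GRing.Theory.
Local Open Scope ring_scope.

Section S.
Variable F : fieldType.
Variables k m : nat.

Lemma reach_entry r (A : 'M[F]_k) (B : 'M[F]_(k, m)) (u : 'M[F]_(r, k)) a
   (j : 'I_(k * m)) (c : 'I_m) : val c = (j %% m)%N ->
  (u *m reach A B) a j = (u *m (A ^+ (j %/ m) *m B)) a c.
Proof.
move=> hc; rewrite !mxE; apply: eq_bigr => l _; rewrite !mxE.
by have -> : Ordinal (reach_col_lt j) = c by apply: val_inj.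
Qed.

Lemma reach0P r (A : 'M[F]_k) (B : 'M[F]_(k, m)) (u : 'M[F]_(r, k)) :
  (u *m reach A B == 0) = [forall i : 'I_k, u *m (A ^+ i *m B) == 0].
Proof.
apply/eqP/forallP => [H i | H].
  apply/eqP/matrixP => a c.
  have hj : (i * m + c < k * m)%N.
    apply: (@leq_trans (i * m + m)); first by rewrite ltn_add2l.
    by rewrite -mulSnr leq_mul2r ltn_ord orbT.
  have hm : (0 < m)%N by apply: (leq_ltn_trans _ (ltn_ord c)).
  have := @reach_entry _ A B u a (Ordinal hj) c.
  rewrite /= modnMDl modn_small // => /(_ erefl).
  by rewrite divnMDl // divn_small // addn0 H !mxE.
apply/matrixP => a j.
have hm : (0 < m)%N.
  case: m j => [|//] j; by case: j => j; rewrite muln0.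
have hi : (j %/ m < k)%N by rewrite ltn_divLR.
rewrite (@reach_entry _ A B u a j (Ordinal (reach_col_lt j))) //.
by have /eqP -> := H (Ordinal hi); rewrite !mxE.
Qed.
End S.

Section CH.
Variable F : fieldType.
Variables k' m : nat.
Local Notation k := k'.+1.

Lemma CH_all r (A : 'M[F]_k) (B : 'M[F]_(k, m)) (u : 'M[F]_(r, k)) :
  (forall i : 'I_k, u *m (A ^+ i *m B) = 0) ->
  forall i, u *m (A ^+ i *m B) = 0.
Proof.
move=> H i.
set p := char_poly A.
have pn0 : p != 0 by rewrite monic_neq0 // char_poly_monic.
have -> : A ^+ i = horner_mx A ('X^i %% p).
  have -> : A ^+ i = horner_mx A 'X^i by rewrite rmorphXn /= horner_mx_X.
  by rewrite [in LHS](divp_eq ('X^i)%R p) rmorphD rmorphM /= Cayley_Hamilton mulr0 add0r.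
have hs : (size ('X^i %% p)%R <= k)%N.
  by rewrite -ltnS -(size_char_poly A) ltn_modp.
rewrite -(coefK ('X^i %% p)) poly_def rmorph_sum /=.
rewrite mulmx_suml mulmx_sumr big1 // => j _.
rewrite horner_mxZ rmorphXn /= horner_mx_X -scalemxAl -scalemxAr.
have hj : (j < k)%N := leq_trans (ltn_ord j) hs.
by rewrite (H (Ordinal hj)) scaler0.
Qed.
End CH.
Section Main.
Variable F : fieldType.
Variables k' m : nat.
Local Notation k := k'.+1.

Lemma invP (A : 'M[F]_k) (B : 'M[F]_(k, m)) r (U : 'M[F]_(r, k)) :
  T_invariant (col_mx A^T B^T) U = ((U *m A <= U)%MS && (U *m B == 0)).
Proof.
rewrite /T_invariant /inclW tr_col_mx !trmxK mul_mx_row.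
apply/idP/andP => [/submxP [X] | [/submxP [X hX] /eqP hB]].
  by rewrite mul_mx_row mulmx0 => /eq_row_mx [-> ->]; by split=> //; apply: submxMl.
rewrite hX hB.
have -> : row_mx (X *m U) (0 : 'M_(r, m)) = X *m row_mx U 0.
  by rewrite mul_mx_row mulmx0.
exact: submxMl.
Qed.

Lemma inv_all (A : 'M[F]_k) (B : 'M[F]_(k, m)) r (U : 'M[F]_(r, k)) :
  T_invariant (col_mx A^T B^T) U -> forall i, U *m (A ^+ i *m B) = 0.
Proof.
rewrite invP => /andP [/submxP [X hX] /eqP hB].
elim => [|i IH]; first by rewrite expr0 mul1mx.
by rewrite exprS -mulmxE -(mulmxA A) mulmxA hX -mulmxA IH mulmx0.
Qed.

Lemma main (A : 'M[F]_k) (B : 'M[F]_(k, m)) :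
  let Tm := col_mx A^T B^T in
  (exists U : 'M[F]_k, is_largest_invariant Tm U) /\
  (forall U : 'M[F]_k, is_largest_invariant Tm U ->
     \rank (reach A B) = (k - \rank U)%N).
Proof.
move=> Tm.
set K := kermx (reach A B).
have Kall : forall i, K *m (A ^+ i *m B) = 0.
  apply: CH_all => i.
  have h : K *m reach A B == 0 by rewrite mulmx_ker.
  by move: h; rewrite reach0P => /forallP /(_ i) /eqP.
have subK : forall r (U : 'M[F]_(r, k)), T_invariant Tm U -> (U <= K)%MS.
  move=> r U /inv_all hU; rewrite sub_kermx reach0P.
  by apply/forallP => i; rewrite hU.
have Kinv : T_invariant Tm K.
  rewrite /Tm invP; apply/andP; split.
    rewrite sub_kermx reach0P; apply/forallP => i.
    by rewrite -mulmxA (mulmxA A) (_ : A *m A ^+ i = A ^+ i.+1) ?Kall ?exprS.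
  by have := Kall 0%N; rewrite expr0 mul1mx => ->.
split; first by exists K; split.
move=> U [hU hmax].
have -> : \rank U = \rank K.
  by apply/eqP; rewrite eqn_leq !mxrankS // ?subK // hmax.
by rewrite mxrank_ker subKn // rank_leq_row.
Qed.
End Main.

Theorem corollary4 (F : finFieldType) (n k : nat) (hk : (0 < k)%N) (hkn : (k < n)%N)
    (A : 'M[F]_k) (B : 'M[F]_(k, n - k)) :
  let Tm : 'M[F]_(k + (n - k), k) := col_mx A^T B^T in
  (exists U : 'M[F]_k, is_largest_invariant Tm U) /\
  (forall U : 'M[F]_k, is_largest_invariant Tm U ->
     \rank (reach A B) = (k - \rank U)%N).
Proof.
case: k hk hkn A B => [//|k'] _ _ A B.
exact: main.
Qed.
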